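(* Let $(\mathfrak g,\cdot,N)$ and $(\mathfrak g^*,\circ,S^* )$ be finite-dimensional Nijenhuis perm algebras (with $S:\mathfrak g\to\mathfrak g$ linear and $S^*$ its dual), and let $((\mathfrak g\oplus\mathfrak g^*,N+S^*,\mathfrak B),(\mathfrak g,N),(\mathfrak g^*,S^* ))$ be a Manin triple of NF perm algebras. Then: (1) the adjoint of $N+S^*$ with respect to $\mathfrak B$ is $S+N^*$, and $S+N^*$ is admissible to the Nijenhuis perm algebra $(\mathfrak g\oplus\mathfrak g^*,N+S^* )$; (2) $S$ is admissible to $(\mathfrak g,N)$; (3) $N^*$ is admissible to $(\mathfrak g^*,S^* )$.
   Context: Over a field $K$. A (right) perm algebra: bilinear product with $(xy)z=x(yz)=x(zy)$. A Nijenhuis operator $N$ on a perm algebra: $N(x)N(y)+N^2(xy)=N(N(x)y)+N(xN(y))$. A bilinear form $\mathfrak B$ is invariant if $\mathfrak B(xy,z)=\mathfrak B(y,zx)-\mathfrak B(y,xz)$. An NF perm algebra is a triple $(A,N,\mathfrak B)$ with $(A,N)$ a Nijenhuis perm algebra and $\mathfrak B$ a nondegenerate invariant bilinear form; the adjoint $\widehat N$ of $N$ is defined by $\mathfrak B(N(x),y)=\mathfrak B(x,\widehat N(y))$. A Manin triple of Frobenius perm algebra associated to $(\mathfrak g,\cdot)$ and $(\mathfrak g^*,\circ)$ is a perm algebra structure on $\mathfrak g\oplus\mathfrak g^*$ containing $(\mathfrak g,\cdot)$ and $(\mathfrak g^*,\circ)$ as subalgebras for which the form $\mathfrak B(x+a,y+b)=\langle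 x,b\rangle-\langle y,a\rangle$ ($x,y\in\mathfrak g$, $a,b\in\mathfrak g^*$) is invariant. A Manin triple of NF perm algebra $((\mathfrak g\oplus\mathfrak g^*,N+S^*,\mathfrak B),(\mathfrak g,N),(\mathfrak g^*,S^* ))$ is such a Manin triple for which $(\mathfrak g\oplus\mathfrak g^*,N+S^*,\mathfrak B)$ is an NF perm algebra, where $(N+S^* )(x+a)=N(x)+S^*(a)$; similarly $(S+N^* )(x+a)=S(x)+N^*(a)$ with $N^*$ the dual of $N$. A linear map $S$ on a Nijenhuis perm algebra $(A,N)$ is admissible to $(A,N)$ if for all $x,y\in A$: $S(N(x)y)+xS^2(y)-N(x)S(y)-S(xS(y))=0$ and $S(xN(y))+S^2(x)y-S(x)N(y)-S(S(x)y)=0$. *)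

(* Defs.v *)
From HB Require Import structures.
From mathcomp Require Import all_boot all_order all_algebra.
Set Implicit Arguments. Unset Strict Implicit. Unset Printing Implicit Defensive.
Import GRing.Theory.
Local Open Scope ring_scope.

Section Generic.
Variables (K : fieldType) (A : lmodType K).

Definition bilinear_prod (m : A -> A -> A) : Prop :=
  (forall x a u v, m x (a *: u + v) = a *: m x u + m x v) /\
  (forall y a u v, m (a *: u + v) y = a *: m u y + m v y).

Definition perm_alg (m : A -> A -> A) : Prop :=
  bilinear_prod m /\
  (forall x y z, m (m x y) z = m x (m y z) /\ m x (m y z) = m x (m z y)).

Definition linmap (f : A -> A) : Prop :=
  forall a u v, f (a *: u + v) = a *: f u + f v.

Definition nijenhuis_op (m : A -> A -> A) (N : A -> A) : Prop :=
  forall x y, m (N x) (N y) + N (N (m x y)) = N (m (N x) y) + N (m x (N y)).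

Definition nijenhuis_perm_alg (m : A -> A -> A) (N : A -> A) : Prop :=
  perm_alg m /\ linmap N /\ nijenhuis_op m N.

Definition bilinear_form (B : A -> A -> K) : Prop :=
  (forall x a u v, B x (a *: u + v) = a * B x u + B x v) /\
  (forall y a u v, B (a *: u + v) y = a * B u y + B v y).

Definition nondegenerate (B : A -> A -> K) : Prop :=
  (forall x, (forall y, B x y = 0) -> x = 0) /\
  (forall y, (forall x, B x y = 0) -> y = 0).

Definition invariant_form (m : A -> A -> A) (B : A -> A -> K) : Prop :=
  forall x y z, B (m x y) z = B y (m z x) - B y (m x z).

Definition NF_perm_alg (m : A -> A -> A) (N : A -> A) (B : A -> A -> K) : Prop :=
  nijenhuis_perm_alg m N /\ bilinear_form B /\ nondegenerate B /\
  invariant_form m B.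

Definition is_adjoint (B : A -> A -> K) (N Nh : A -> A) : Prop :=
  forall x y, B (N x) y = B x (Nh y).

Definition admissible (m : A -> A -> A) (N S : A -> A) : Prop :=
  linmap S /\
  (forall x y, S (m (N x) y) + m x (S (S y)) - m (N x) (S y) - S (m x (S y)) = 0) /\
  (forall x y, S (m x (N y)) + m (S (S x)) y - m (S x) (N y) - S (m (S x) y) = 0).

End Generic.

Section Dual.
Variables (K : fieldType) (V : vectType K).

(* the dual space g^* of a finite-dimensional g = V *)
Definition dual := 'Hom(V, K^o).

Definition dualmap (f : 'End(V)) : dual -> dual := fun a => (a \o f)%VF.

(* the bilinear form B(x + a, y + b) = <x,b> - <y,a> on g (+) g^* *)
Definition manin_form (u v : V * dual) : K :=
  (v.2 u.1 : K) - (u.2 v.1 : K).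

Definition sum_map (f : V -> V) (g : dual -> dual) : V * dual -> V * dual :=
  fun u => (f u.1, g u.2).

Definition manin_triple_perm (mg : V -> V -> V) (mgs : dual -> dual -> dual)
    (mD : V * dual -> V * dual -> V * dual) : Prop :=
  perm_alg mD /\
  (forall x y : V, mD (x, 0) (y, 0) = (mg x y, 0)) /\
  (forall a b : dual, mD (0, a) (0, b) = (0, mgs a b)) /\
  invariant_form mD manin_form.

Definition manin_triple_NF (mg : V -> V -> V) (mgs : dual -> dual -> dual)
    (mD : V * dual -> V * dual -> V * dual) (N S : 'End(V)) : Prop :=
  manin_triple_perm mg mgs mD /\
  NF_perm_alg mD (sum_map N (dualmap S)) manin_form.

End Dual.

(* Main.v *)
Require Import Defs.
From mathcomp Require Import all_boot all_order all_algebra.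
From mathcomp Require Import ring.
Local Open Scope ring_scope.
Import GRing.Theory.

Section Gen.
Variables (K : fieldType) (A : lmodType K) (m : A -> A -> A) (N Nh : A -> A)
  (B : A -> A -> K).
Hypotheses (HB : Defs.bilinear_form B) (Hnd : Defs.nondegenerate B)
  (Hinv : Defs.invariant_form m B) (Hskew : forall u v, B u v = - B v u)
  (Hadj : Defs.is_adjoint B N Nh) (HN : Defs.nijenhuis_op m N).

Lemma BDl u v w : B (u + v) w = B u w + B v w.
Proof. by have := HB.2 w 1 u v; rewrite scale1r mul1r. Qed.
Lemma BDr u v w : B w (u + v) = B w u + B w v.
Proof. by have := HB.1 w 1 u v; rewrite scale1r mul1r. Qed.
Lemma B0l w : B 0 w = 0.
Proof. have h := BDl 0 0 w; rewrite addr0 in h.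
by apply: (addrI (B 0 w)); rewrite addr0 -h. Qed.
Lemma BNl u w : B (- u) w = - B u w.
Proof. apply: (addIr (B u w)); by rewrite -BDl addNr B0l addNr. Qed.
Lemma BsubL u v w : B (u - v) w = B u w - B v w.
Proof. by rewrite BDl BNl. Qed.
Lemma BNhl p w : B (Nh p) w = B p (N w).
Proof. by rewrite Hskew -Hadj Hskew opprK. Qed.

Lemma Bswap a b c : B (m a b) c = B a (m c b).
Proof.
have i1 := Hinv b a c. have i2 := Hinv b c a.
rewrite (Hskew a (m c b)) (Hskew a (m b c)) in i1.
rewrite (Hskew c (m a b)) (Hskew c (m b a)) in i2.
rewrite i2 in i1. rewrite (Hskew a).
move: i1 => /eqP; rewrite -subr_eq0 => /eqP h.
by rewrite -[LHS]subr0 -h; ring.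
Qed.

Lemma adm1 x y : Nh (m (N x) y) + m x (Nh (Nh y)) - m (N x) (Nh y)
   - Nh (m x (Nh y)) = 0.
Proof using HB Hnd Hinv Hskew Hadj HN.
apply: Hnd.1 => w.
have e1 : B (Nh (m (N x) y)) w = B y (m (N w) (N x)) - B y (m (N x) (N w))
  by rewrite BNhl Hinv.
have e2 : B (m x (Nh (Nh y))) w = B y (N (N (m w x))) - B y (N (N (m x w)))
  by rewrite Hinv !BNhl.
have e3 : B (m (N x) (Nh y)) w = B y (N (m w (N x))) - B y (N (m (N x) w))
  by rewrite Hinv !BNhl.
have e4 : B (Nh (m x (Nh y))) w = B y (N (m (N w) x)) - B y (N (m x (N w)))
  by rewrite BNhl Hinv !BNhl.
have n1 := congr1 (B y) (HN w x); rewrite !BDr in n1.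
have n2 := congr1 (B y) (HN x w); rewrite !BDr in n2.
have h1 : B y (m (N w) (N x)) = B y (N (m (N w) x)) + B y (N (m w (N x)))
   - B y (N (N (m w x))) by rewrite -n1 addrK.
have h2 : B y (m (N x) (N w)) = B y (N (m (N x) w)) + B y (N (m x (N w)))
   - B y (N (N (m x w))) by rewrite -n2 addrK.
rewrite !BsubL BDl e1 e2 e3 e4 h1 h2; ring.
Qed.

Lemma adm2 x y : Nh (m x (N y)) + m (Nh (Nh x)) y - m (Nh x) (N y)
   - Nh (m (Nh x) y) = 0.
Proof using HB Hnd Hinv Hskew Hadj HN.
apply: Hnd.1 => w.
have f1 : B (Nh (m x (N y))) w = B x (m (N w) (N y)) by rewrite BNhl Bswap.
have f2 : B (m (Nh (Nh x)) y) w = B x (N (N (m w y))) by rewrite Bswap !BNhl.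
have f3 : B (m (Nh x) (N y)) w = B x (N (m w (N y))) by rewrite Bswap BNhl.
have f4 : B (Nh (m (Nh x) y)) w = B x (N (m (N w) y))
  by rewrite BNhl Bswap BNhl.
have n := congr1 (B x) (HN w y); rewrite !BDr in n.
rewrite !BsubL BDl f1 f2 f3 f4 n; ring.
Qed.

End Gen.

Theorem lemma2p21 (K : fieldType) (V : vectType K)
    (mg : V -> V -> V) (mgs : dual V -> dual V -> dual V)
    (mD : V * dual V -> V * dual V -> V * dual V) (N S : 'End(V)) :
  nijenhuis_perm_alg mg N ->
  nijenhuis_perm_alg mgs (dualmap S) ->
  manin_triple_NF mg mgs mD N S ->
  (is_adjoint (@manin_form K V) (sum_map N (dualmap S)) (sum_map S (dualmap N)) /\
   admissible mD (sum_map N (dualmap S)) (sum_map S (dualmap N))) /\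
  admissible mg N S /\
  admissible mgs (dualmap S) (dualmap N).
Proof.
move=> _ _ [[_ [Hg [Hgs _]]] [[_ [_ HN]] [HB [Hnd Hinv]]]].
have Hadj : is_adjoint (@manin_form K V) (sum_map N (dualmap S))
    (sum_map S (dualmap N)).
  by move=> [x a] [y b]; rewrite /manin_form /sum_map /dualmap /= !comp_lfunE.
have Hskew : forall u v, @manin_form K V u v = - manin_form v u.
  by move=> u v; rewrite /manin_form opprB.
have linS : linmap S by move=> a u v; rewrite linearP.
have linNd : linmap (dualmap N).
  move=> a u v; apply/lfunP => x.
  by rewrite /dualmap !(comp_lfunE, add_lfunE, scale_lfunE).
have linD : linmap (sum_map S (dualmap N)).
  by move=> a [u1 u2] [v1 v2]; rewrite /sum_map /= linS linNd.
have A1 := @adm1 _ _ _ _ _ _ HB Hnd Hinv Hskew Hadj HN.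
have A2 := @adm2 _ _ _ _ _ _ HB Hnd Hinv Hskew Hadj HN.
have d0 : forall f : 'End(V), dualmap f 0 = 0.
  by move=> f; apply/lfunP => x; rewrite /dualmap comp_lfunE !zero_lfunE.
have sl : forall (f : 'End(V)) (g : 'End(V)) x,
    sum_map f (dualmap g) (x, 0) = (f x, 0).
  by move=> f g x; rewrite /sum_map /= d0.
have sr : forall (f : 'End(V)) (g : 'End(V)) a,
    sum_map f (dualmap g) (0, a) = (0, dualmap g a).
  by move=> f g a; rewrite /sum_map /= linear0.
split.
  split; first exact: Hadj.
  split; first exact: linD.
  by split=> x y; [apply: A1 | apply: A2].
split.
  split; first exact: linS.
  split=> x y.
    have := congr1 fst (A1 (x, 0) (y, 0)).
    rewrite !sl (Hg (N x) y) (Hg x (S (S y))) (Hg (N x) (S y)) (Hg x (S y)) !sl.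
    by [].
  have := congr1 fst (A2 (x, 0) (y, 0)).
  rewrite !sl (Hg x (N y)) (Hg (S (S x)) y) (Hg (S x) (N y)) (Hg (S x) y) !sl.
  by [].
split; first exact: linNd.
split=> a b.
  have := congr1 snd (A1 (0, a) (0, b)).
  rewrite !sr (Hgs (dualmap S a) b) (Hgs a (dualmap N (dualmap N b)))
    (Hgs (dualmap S a) (dualmap N b)) (Hgs a (dualmap N b)) !sr.
  by [].
have := congr1 snd (A2 (0, a) (0, b)).
rewrite !sr (Hgs a (dualmap S b)) (Hgs (dualmap N (dualmap N a)) b)
  (Hgs (dualmap N a) (dualmap S b)) (Hgs (dualmap N a) b) !sr.
by [].
Qed.
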